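(* Let $P:\mathcal C^{op}\to\mathbf{MSLat}$ be a primary doctrine and $S\in\mathfrak I_{\mathrm{Fr}}(P)(c)$. Then $S=\exists_f\eta^P_d(x)$ for some morphism $f:d\to c$ of $\mathcal C$ and some $x\in P(d)$ (where $\exists_f$ is the left adjoint of $\mathfrak I_{\mathrm{Fr}}(P)(f)$) if and only if the object $(c,S)$ is supercompact in the site $(\mathcal C\rtimes\mathfrak I_{\mathrm{Fr}}(P),K_{\mathfrak I_{\mathrm{Fr}}(P)})$, i.e. every $K_{\mathfrak I_{\mathrm{Fr}}(P)}$-covering sieve on $(c,S)$ contains a single morphism which by itself generates a covering sieve.
   Context: $\mathbf{MSLat}$: meet-semilattices with top and finite-meet-preserving maps; a primary doctrine is $P:\mathcal C^{op}\to\mathbf{MSLat}$ with $\mathcal C$ having finite limits. For a doctrine $Q$, $\mathcal C\rtimes Q$ has objects $(c,x)$, $x\in Q(c)$, morphisms $f:(c,x)\to(d,y)$ the $f:c\to d$ with $x\le Q(f)(y)$. Free geometric completion $\mathfrak I_{\mathrm{Fr}}(P):\mathcal C^{op}\to\mathbf{Frm}$: $\mathfrak I_{\mathrm{Fr}}(P)(c)$ is the set, ordered by inclusion, of sets $S$ of pairs $(f,x)$ with $f:d\to c$ in $\mathcal C$, $x\in P(d)$, such that $(f,x)\in S$, $g:e\to d$, $y\in P(e)$, $y\le P(g)(x)$ imply $(f\circ g,y)\in S$; for $f:d\to c$, $\mathfrak I_{\mathrm{Fr}}(P)(f)(S)=\{(g,y):(f\circ g,y)\in S\}$, which has a left adjoint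 $\exists_f$ (explicitly $\exists_f(T)=\{(f\circ g,y):(g,y)\in T\}$). The unit is $\eta^P_c(x)=\{(g,y):g:e\to c,\ y\in P(e),\ y\le P(g)(x)\}$. $K_{\mathfrak I_{\mathrm{Fr}}(P)}$ is the topology on $\mathcal C\rtimes\mathfrak I_{\mathrm{Fr}}(P)$ in which $\{f_i:(c_i,U_i)\to(d,V)\}$ covers iff $V=\bigcup_i\exists_{f_i}U_i$. *)

(* Defs.v *)
Set Implicit Arguments.
Unset Strict Implicit.

Record Category := {
  Ob :> Type;
  Hom : Ob -> Ob -> Type;
  idm : forall a, Hom a a;
  comp : forall a b c, Hom b c -> Hom a b -> Hom a c;
  comp_id_l : forall a b (f : Hom a b), comp (idm b) f = f;
  comp_id_r : forall a b (f : Hom a b), comp f (idm a) = f;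
  comp_assoc : forall a b c d (f : Hom c d) (g : Hom b c) (h : Hom a b),
      comp f (comp g h) = comp (comp f g) h
}.
Arguments Hom {C} a b : rename.
Arguments idm {C} a : rename.
Arguments comp {C a b c} f g : rename.

Record HasFiniteLimits (C : Category) := {
  term : Ob C;
  to_term : forall a : Ob C, Hom a term;
  to_term_uniq : forall (a : Ob C) (f g : Hom a term), f = g;
  pb : forall (a b c : Ob C), Hom a c -> Hom b c -> Ob C;
  pb1 : forall a b c (f : Hom a c) (g : Hom b c), Hom (pb f g) a;
  pb2 : forall a b c (f : Hom a c) (g : Hom b c), Hom (pb f g) b;
  pb_comm : forall a b c (f : Hom a c) (g : Hom b c),
      comp f (pb1 f g) = comp g (pb2 f g);
  pb_univ : forall a b c (f : Hom a c) (g : Hom b c) x (h : Hom x a) (k : Hom x b),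
      comp f h = comp g k ->
      exists u : Hom x (pb f g),
        (comp (pb1 f g) u = h /\ comp (pb2 f g) u = k) /\
        forall v : Hom x (pb f g), comp (pb1 f g) v = h -> comp (pb2 f g) v = k -> v = u
}.

Record MSLat := {
  car :> Type;
  le : car -> car -> Prop;
  le_refl : forall x, le x x;
  le_trans : forall x y z, le x y -> le y z -> le x z;
  le_antisym : forall x y, le x y -> le y x -> x = y;
  top : car;
  le_top : forall x, le x top;
  meet : car -> car -> car;
  meet_l : forall x y, le (meet x y) x;
  meet_r : forall x y, le (meet x y) y;
  meet_glb : forall x y z, le z x -> le z y -> le z (meet x y)
}.
Arguments le {m} x y : rename.
Arguments top {m} : rename.
Arguments meet {m} x y : rename.

Record PrimaryDoctrine (C : Category) := {
  PO : Ob C -> MSLat;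
  Pmap : forall a b : Ob C, Hom a b -> PO b -> PO a;
  Pmap_top : forall a b (f : Hom a b), Pmap f top = top;
  Pmap_meet : forall a b (f : Hom a b) (x y : PO b),
      Pmap f (meet x y) = meet (Pmap f x) (Pmap f y);
  Pmap_id : forall a (x : PO a), Pmap (idm a) x = x;
  Pmap_comp : forall a b c (f : Hom a b) (g : Hom b c) (x : PO c),
      Pmap (comp g f) x = Pmap f (Pmap g x)
}.
Arguments PO {C} p a : rename.
Arguments Pmap {C} p {a b} f x : rename.

Section FreeGeometric.
Variable C : Category.
Variable P : PrimaryDoctrine C.

Definition pairs (c : Ob C) := forall d : Ob C, Hom d c -> PO P d -> Prop.

(* Elements of I_Fr(P)(c): sets of pairs that are downward closed. *)
Record IFr (c : Ob C) := {
  ideal :> pairs c;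
  ideal_closed : forall d (f : Hom d c) (x : PO P d), ideal f x ->
      forall e (g : Hom e d) (y : PO P e), le y (Pmap P g x) -> ideal (comp f g) y
}.

Definition psub c (A B : pairs c) : Prop := forall d (g : Hom d c) y, A d g y -> B d g y.
Definition peq c (A B : pairs c) : Prop := forall d (g : Hom d c) y, A d g y <-> B d g y.

Definition IFr_map d c (f : Hom d c) (S : pairs c) : pairs d :=
  fun e g y => S e (comp f g) y.
Arguments IFr_map {d c} f S e g y : rename.

Definition exists_f d c (f : Hom d c) (T : pairs d) : pairs c :=
  fun e k y => exists g : Hom e d, k = comp f g /\ T e g y.
Arguments exists_f {d c} f T e k y : rename.

Definition eta c (x : PO P c) : pairs c :=
  fun e g y => le y (Pmap P g x).
Arguments eta {c} x e g y : rename.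

(* Morphisms (e,U) -> (c,S) of C ⋊ I_Fr(P): f : e -> c with U <= I_Fr(P)(f)(S). *)
Definition is_mor e c (U : IFr e) (S : IFr c) (f : Hom e c) : Prop :=
  psub U (IFr_map f S).

Definition sieve_on c (S : IFr c) := forall e : Ob C, IFr e -> Hom e c -> Prop.

Definition is_sieve c (S : IFr c) (R : sieve_on S) : Prop :=
  (forall e (U : IFr e) (f : Hom e c), R e U f -> is_mor U S f) /\
  (forall e (U : IFr e) (f : Hom e c), R e U f ->
     forall e' (U' : IFr e') (h : Hom e' e), is_mor U' U h -> R e' U' (comp f h)).

(* K_{I_Fr(P)}-covering: S = union over f : (e,U) -> (c,S) in R of exists_f U. *)
Definition covers c (S : IFr c) (R : sieve_on S) : Prop :=
  peq S (fun d g y => exists e (U : IFr e) (f : Hom e c), R e U f /\ exists_f f (ideal U) d g y).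

Definition gen_sieve c (S : IFr c) e (U : IFr e) (f : Hom e c) : sieve_on S :=
  fun e' U' k => exists h : Hom e' e, is_mor U' U h /\ k = comp f h.

Definition supercompact c (S : IFr c) : Prop :=
  forall R : sieve_on S, is_sieve R -> covers R ->
    exists e (U : IFr e) (f : Hom e c),
      R e U f /\ covers (gen_sieve S U f).

End FreeGeometric.

(* Main.v *)
Require Import Defs.

Section H.
Variable C : Category.
Variable P : PrimaryDoctrine C.

Lemma Pmono a b (h : Hom a b) (u v : PO P b) : le u v -> le (Pmap P h u) (Pmap P h v).
Proof.
  intros Huv.
  assert (E : meet u v = u).
  { apply le_antisym; [apply meet_l|apply meet_glb; [apply le_refl|exact Huv]]. }
  rewrite <- E, Pmap_meet. apply meet_r.
Qed.

Lemma eta_closed (c : Ob C) (x : PO P c) :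
  forall d (f : Hom d c) (z : PO P d), eta x f z ->
      forall e (g : Hom e d) (y : PO P e), le y (Pmap P g z) -> eta x (comp f g) y.
Proof.
  unfold eta; intros d f z Hz e g y Hy.
  rewrite Pmap_comp. eapply le_trans; [exact Hy|]. apply Pmono. exact Hz.
Qed.

Definition etaI (c : Ob C) (x : PO P c) : IFr P c :=
  {| ideal := eta x; ideal_closed := @eta_closed c x |}.

End H.

Theorem lemma7p6 (C : Category) (L : HasFiniteLimits C) (P : PrimaryDoctrine C)
  (c : Ob C) (S : IFr P c) :
  (exists (d : Ob C) (f : Hom d c) (x : PO P d),
      peq (ideal S) (exists_f f (eta x)))
  <-> supercompact S.
Proof.
  split.
  - intros [d [f [x Hs]]] R HR Hc.
    assert (Hfx : ideal S f x).
    { apply Hs. exists (idm d). split; [symmetry; apply comp_id_r|].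
      unfold eta. rewrite Pmap_id. apply le_refl. }
    apply Hc in Hfx. destruct Hfx as [e [U [h [HRh [g [Eg HUg]]]]]].
    exists e, U, h. split; [exact HRh|].
    intros d' k y. split.
    + intro Hk. apply Hs in Hk. destruct Hk as [g0 [Ek Hy]].
      exists e, U, h. split.
      * exists (idm e). split; [|symmetry; apply comp_id_r].
        intros d2 g2 y2 H2. unfold IFr_map. rewrite comp_id_l. exact H2.
      * exists (comp g g0). split.
        -- rewrite Ek, Eg. symmetry; apply comp_assoc.
        -- exact (ideal_closed HUg Hy).
    + intros [e' [U' [k' [[h' [Hm Ek']] [g' [Ek HU']]]]]].
      subst k k'. apply Hm in HU'. unfold IFr_map in HU'.
      apply (proj1 HR) in HRh. apply HRh in HU'. unfold IFr_map in HU'.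
      rewrite <- comp_assoc. exact HU'.
  - intros Hsc.
    set (R := fun e (U : IFr P e) (f : Hom e c) =>
          is_mor U S f /\ exists x : PO P e, psub U (eta x) /\ psub (eta x) (IFr_map f S)).
    assert (HR : is_sieve (S:=S) R).
    { split.
      - intros e U f [H _]. exact H.
      - intros e U f [Hm [x [H1 H2]]] e' U' h Hh. split.
        + intros d g y Hy. apply Hh in Hy. apply Hm in Hy. unfold IFr_map in *.
          rewrite comp_assoc in Hy. exact Hy.
        + exists (Pmap P h x). split.
          * intros d g y Hy. apply Hh in Hy. apply H1 in Hy. unfold IFr_map, eta in *.
            rewrite Pmap_comp in Hy. exact Hy.
          * intros d g y Hy. unfold eta, IFr_map in *. rewrite <- Pmap_comp in Hy.
            apply H2 in Hy. unfold IFr_map in Hy. rewrite comp_assoc in Hy. exact Hy. }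
    assert (Hc : covers (S:=S) R).
    { intros d g y. split.
      - intro Hy. exists d, (@etaI C P d y), g. split.
        + split.
          * intros d2 g2 y2 H2. unfold IFr_map. simpl in H2. unfold eta in H2.
            exact (ideal_closed Hy H2).
          * exists y. split; [intros ? ? ? H; exact H|].
            intros d2 g2 y2 H2. unfold IFr_map. unfold eta in H2.
            exact (ideal_closed Hy H2).
        + exists (idm d). split; [symmetry; apply comp_id_r|].
          simpl. unfold eta. rewrite Pmap_id. apply le_refl.
      - intros [e [U [f [[Hm _] [g' [Eg HU]]]]]]. subst g. apply Hm in HU. exact HU. }
    destruct (Hsc R HR Hc) as [e [U [f [[Hm [x [H1 H2]]] Hg]]]].
    exists e, f, x. intros d g y. split.
    + intro Hy. apply Hg in Hy.
      destruct Hy as [e' [U' [k [[h [Hh Ek]] [g' [Eg HU']]]]]].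
      subst k g. apply Hh in HU'. unfold IFr_map in HU'. apply H1 in HU'.
      exists (comp h g'). split; [symmetry; apply comp_assoc| exact HU'].
    + intros [g' [Eg He]]. subst g. apply H2 in He. exact He.
Qed.
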